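(* Let $F$ be a field with $\mathrm{char}\,F\neq 2$, and let $A$ be a flexible quadratic $F$-algebra. If for every $3$-dimensional subalgebra $B$ of $A$ the restriction of the norm $n$ of $A$ to $B$ is non-degenerate, then $A$ is von-Neumann finite and reversible.
   Context: Algebras are vector spaces with bilinear, not necessarily associative, multiplication, and are unital. $A$ is flexible if $a(ba)=(ab)a$ for all $a,b$; quadratic if $1,a,a^2$ are linearly dependent for all $a$. For a quadratic algebra with $\mathrm{char}\,F\ne2$, set $\mathrm{Im}\,A=\{u\in A\setminus F1: u^2\in F1\}\cup\{0\}$; then $A=F1\oplus\mathrm{Im}\,A$, and writing $a=\alpha+u$ with $\alpha\in F,u\in\mathrm{Im}\,A$, the norm is $n(a)=\alpha^2-(u,u)$, where $(u,v)\in F$ is the $F1$-component of $uv$ for $u,v\in \mathrm{Im}\,A$ (equivalently $n(a)=a\bar a$ with $\bar a=\alpha-u$). For a quadratic form $q$ on a space $V$ with $\langle x,y\rangle=q(x+y)-q(x)-q(y)$ and $V^\perp=\{x:\langle x,V\rangle=0\}$, $q$ is non-degenerate if $V^\perp=0$ or ($\dim V^\perp=1$ and $q(V^\perp)\neq0$). von-Neumann finite: $ab=1\Rightarrow ba=1$; reversible: $ab=0\Rightarrow ba=0$. *)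

(* Defs.v *)
(* A (possibly infinite-dimensional, non-associative, unital)
   F-algebra is an lmodType F together with a bilinear multiplication [mul]
   and a two-sided unit [one]. *)
From mathcomp Require Import all_boot all_order all_algebra.
Set Implicit Arguments. Unset Strict Implicit. Unset Printing Implicit Defensive.
Import GRing.Theory.
Local Open Scope ring_scope.

Section Defs.
Variables (F : fieldType) (A : lmodType F) (mul : A -> A -> A) (one : A).

Definition unital_algebra : Prop :=
  [/\ forall (k : F) (x y z : A), mul (k *: x + y) z = k *: mul x z + mul y z,
      forall (k : F) (x y z : A), mul z (k *: x + y) = k *: mul z x + mul z y,
      forall x, mul one x = x
    & forall x, mul x one = x].

Definition flexible : Prop := forall a b, mul a (mul b a) = mul (mul a b) a.

Definition quadratic : Prop :=
  forall a : A, exists al be ga : F,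
    [/\ (al, be, ga) != (0, 0, 0) & al *: one + be *: a + ga *: mul a a = 0].

Definition ImA (u : A) : Prop :=
  u = 0 \/ ((~ exists al : F, u = al *: one) /\ exists c : F, mul u u = c *: one).

Definition is_norm (n : A -> F) : Prop :=
  forall (a u : A) (al c : F), ImA u -> a = al *: one + u -> mul u u = c *: one ->
    n a = al ^+ 2 - c.

Definition subspace (V : A -> Prop) : Prop :=
  [/\ V 0, forall x y, V x -> V y -> V (x + y) & forall (k : F) x, V x -> V (k *: x)].

Definition subalgebra (B : A -> Prop) : Prop :=
  [/\ subspace B, B one & forall x y, B x -> B y -> B (mul x y)].

Definition dim3 (V : A -> Prop) : Prop :=
  exists v1 v2 v3 : A, [/\ V v1, V v2, V v3,
    (forall k1 k2 k3 : F, k1 *: v1 + k2 *: v2 + k3 *: v3 = 0 ->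
        [/\ k1 = 0, k2 = 0 & k3 = 0])
  & forall x, V x -> exists k1 k2 k3 : F, x = k1 *: v1 + k2 *: v2 + k3 *: v3].

Definition polar (q : A -> F) (x y : A) : F := q (x + y) - q x - q y.

Definition radical (q : A -> F) (V : A -> Prop) (x : A) : Prop :=
  V x /\ forall y, V y -> polar q x y = 0.

Definition nondegenerate_on (q : A -> F) (V : A -> Prop) : Prop :=
  (forall x, radical q V x -> x = 0) \/
  ((exists v, [/\ radical q V v, v != 0 &
                 forall x, radical q V x -> exists k : F, x = k *: v])
   /\ exists x, radical q V x /\ q x != 0).

Definition von_neumann_finite : Prop := forall a b, mul a b = one -> mul b a = one.

Definition reversible : Prop := forall a b, mul a b = 0 -> mul b a = 0.

End Defs.

(* Main.v *)
Require Import Defs.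
From mathcomp Require Import all_boot all_order all_algebra.
From mathcomp Require Import ring.
From Stdlib Require Import Classical.
Set Implicit Arguments. Unset Strict Implicit. Unset Printing Implicit Defensive.
Import GRing.Theory.
Local Open Scope ring_scope.

Lemma comb1 (F : fieldType) (c : F) (l r z : F) : l = r -> z = c * (l - r) -> z = 0.
Proof. by move=> -> ->; rewrite subrr mulr0. Qed.

Lemma comb2 (F : fieldType) (c1 c2 : F) (l1 r1 l2 r2 z : F) :
  l1 = r1 -> l2 = r2 -> z = c1 * (l1 - r1) + c2 * (l2 - r2) -> z = 0.
Proof. by move=> -> -> ->; rewrite !subrr !mulr0 addr0. Qed.

Section Main.
Variables (F : fieldType) (A : lmodType F) (mul : A -> A -> A) (one : A) (n : A -> F).
Hypothesis H2 : (2 : F) != 0.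
Hypothesis Hu : unital_algebra mul one.
Hypothesis Hfl : flexible mul.
Hypothesis Hq : quadratic mul one.
Hypothesis Hn : is_norm mul one n.
Hypothesis Hnd : forall B : A -> Prop, subalgebra mul one B -> dim3 B -> nondegenerate_on n B.

Lemma amDl x y z : mul (x + y) z = mul x z + mul y z.
Proof. case: Hu => H _ _ _; have := H 1 x y z; by rewrite !scale1r. Qed.
Lemma amDr x y z : mul z (x + y) = mul z x + mul z y.
Proof. case: Hu => _ H _ _; have := H 1 x y z; by rewrite !scale1r. Qed.
Lemma am0l z : mul 0 z = 0.
Proof.
have h := amDl 0 0 z; rewrite addr0 in h.
by apply: (addrI (mul 0 z)); rewrite addr0 -h.
Qed.
Lemma am0r z : mul z 0 = 0.
Proof.
have h := amDr 0 0 z; rewrite addr0 in h.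
by apply: (addrI (mul z 0)); rewrite addr0 -h.
Qed.
Lemma amZl k x z : mul (k *: x) z = k *: mul x z.
Proof. case: Hu => H _ _ _; have := H k x 0 z; by rewrite addr0 am0l addr0. Qed.
Lemma amZr k x z : mul z (k *: x) = k *: mul z x.
Proof. case: Hu => _ H _ _; have := H k x 0 z; by rewrite addr0 am0r addr0. Qed.
Lemma am1l x : mul one x = x.
Proof. by case: Hu. Qed.
Lemma am1r x : mul x one = x.
Proof. by case: Hu. Qed.

Lemma solve_lin (k : F) (w z : A) : k != 0 -> w + k *: z = 0 -> z = (- k^-1) *: w.
Proof.
move=> kn e.
have e1 : k *: z = - w by apply/eqP; rewrite -addr_eq0 addrC; apply/eqP.
by rewrite -[z]scale1r -(mulVf kn) -scalerA e1 scalerN scaleNr.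
Qed.

Lemma dep_comm a b :
  ~ (forall k0 k1 k2 : F, k0 *: one + k1 *: a + k2 *: b = 0 -> [/\ k0 = 0, k1 = 0 & k2 = 0]) ->
  mul a b = mul b a.
Proof.
move=> h.
have [k0 [k1 [k2 [hk hnz]]]] : exists k0 k1 k2, k0 *: one + k1 *: a + k2 *: b = 0 /\
    ~ [/\ k0 = 0, k1 = 0 & k2 = 0].
  apply: NNPP => hn; apply: h => k0 k1 k2 e; apply: NNPP => hn'; apply: hn.
  by exists k0, k1, k2.
have [k2z|k2nz] := eqVneq k2 0.
  have [k1z|k1nz] := eqVneq k1 0.
    have k0nz : k0 != 0 by apply/eqP => k0z; apply: hnz; split.
    move: hk; rewrite k1z k2z !scale0r !addr0 => /eqP.
    rewrite scaler_eq0 (negbTE k0nz) /= => /eqP o0.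
    have za : forall z : A, z = 0 by move=> z; rewrite -(am1l z) o0 am0l.
    by rewrite (za a) (za b).
  move: hk; rewrite k2z scale0r addr0 => /(solve_lin k1nz) ->.
  by rewrite !amZl !amZr am1l am1r.
move: hk => /(solve_lin k2nz) ->.
by rewrite amZl amZr amDl amDr !amZl !amZr am1l am1r.
Qed.

Section Basis.
Variables (x y : A).
Definition cmb (c0 c1 c2 : F) := c0 *: one + c1 *: x + c2 *: y.

Lemma cmbD a0 a1 a2 b0 b1 b2 :
  cmb a0 a1 a2 + cmb b0 b1 b2 = cmb (a0 + b0) (a1 + b1) (a2 + b2).
Proof. rewrite /cmb !scalerDl addrACA; congr (_ + _); by rewrite addrACA. Qed.
Lemma cmbZ k a0 a1 a2 : k *: cmb a0 a1 a2 = cmb (k * a0) (k * a1) (k * a2).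
Proof. by rewrite /cmb !scalerDr !scalerA. Qed.
Lemma cmbN a0 a1 a2 : - cmb a0 a1 a2 = cmb (- a0) (- a1) (- a2).
Proof. by rewrite /cmb !opprD !scaleNr. Qed.
Lemma cmb1 : one = cmb 1 0 0.
Proof. by rewrite /cmb scale1r !scale0r !addr0. Qed.
Lemma cmbx : x = cmb 0 1 0.
Proof. by rewrite /cmb !scale0r add0r scale1r addr0. Qed.
Lemma cmby : y = cmb 0 0 1.
Proof. by rewrite /cmb !scale0r !add0r scale1r. Qed.
Lemma cmb0 : 0 = cmb 0 0 0.
Proof. by rewrite /cmb !scale0r !addr0. Qed.

Ltac tocmb := rewrite ?cmb1 ?cmbx ?cmby; rewrite ?cmb0; rewrite ?(cmbD, cmbZ, cmbN).

Lemma mul_cmb P0 P1 P2 Q0 Q1 Q2 R0 R1 R2 S0 S1 S2 :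
  mul x x = cmb P0 P1 P2 -> mul x y = cmb Q0 Q1 Q2 ->
  mul y x = cmb R0 R1 R2 -> mul y y = cmb S0 S1 S2 -> forall a0 a1 a2 b0 b1 b2,
  mul (cmb a0 a1 a2) (cmb b0 b1 b2) =
  cmb (a0*b0 + a1*b1*P0 + a1*b2*Q0 + a2*b1*R0 + a2*b2*S0)
      (a0*b1 + a1*b0 + a1*b1*P1 + a1*b2*Q1 + a2*b1*R1 + a2*b2*S1)
      (a0*b2 + a2*b0 + a1*b1*P2 + a1*b2*Q2 + a2*b1*R2 + a2*b2*S2).
Proof.
move=> hxx hxy hyx hyy a0 a1 a2 b0 b1 b2.
rewrite {1 2}/cmb !(amDl, amDr, amZl, amZr) !am1l !am1r hxx hxy hyx hyy.
tocmb; congr cmb; ring.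
Qed.

Hypothesis Hind : forall k0 k1 k2, cmb k0 k1 k2 = 0 -> [/\ k0 = 0, k1 = 0 & k2 = 0].

Lemma cmb_inj a0 a1 a2 b0 b1 b2 :
  cmb a0 a1 a2 = cmb b0 b1 b2 -> [/\ a0 = b0, a1 = b1 & a2 = b2].
Proof.
move=> e.
have : cmb (a0 - b0) (a1 - b1) (a2 - b2) = 0 by rewrite -cmbD -cmbN e subrr.
by case/Hind => /eqP; rewrite subr_eq0 => /eqP -> /eqP; rewrite subr_eq0 => /eqP ->
  /eqP; rewrite subr_eq0 => /eqP ->.
Qed.

Lemma quad_cmb c1 c2 : (c1 != 0) || (c2 != 0) ->
  exists t s, mul (cmb 0 c1 c2) (cmb 0 c1 c2) = cmb s (t * c1) (t * c2).
Proof.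
move=> hc.
case: (Hq (cmb 0 c1 c2)) => al [be [ga [nz e]]].
have [gz|gnz] := eqVneq ga 0.
  exfalso; move: e; rewrite gz scale0r addr0.
  rewrite cmb1 !cmbZ cmbD => /Hind [h0 h1 h2].
  have az : al = 0 by move: h0; rewrite !mulr1 !mulr0 !addr0.
  have bz : be = 0.
    move: h1 h2; rewrite !mulr0 !add0r => /eqP; rewrite mulf_eq0 => /orP [/eqP //|h1].
    move/eqP; rewrite mulf_eq0 => /orP [/eqP //|h2]; by rewrite h1 h2 in hc.
  by move: nz; rewrite az bz gz eqxx.
exists (- (be / ga)), (- (al / ga)).
have e0 : mul (cmb 0 c1 c2) (cmb 0 c1 c2) = ga^-1 *: (ga *: mul (cmb 0 c1 c2) (cmb 0 c1 c2)).
  by rewrite scalerA mulVf // scale1r.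
have e1 : ga *: mul (cmb 0 c1 c2) (cmb 0 c1 c2) = - (al *: one + be *: cmb 0 c1 c2).
  by apply/eqP; rewrite -addr_eq0 addrC; apply/eqP.
rewrite e0 e1 cmb1; rewrite ?(cmbD, cmbZ, cmbN); congr cmb; ring.
Qed.

Lemma recenter_x : exists al c, mul (x + (- al) *: one) (x + (- al) *: one) = c *: one.
Proof.
have := @quad_cmb 1 0; rewrite oner_eq0 => /(_ isT) [t [s hq]].
rewrite -cmbx in hq.
exists (t / 2), (s + (t / 2) ^+ 2).
have e : x + (- (t / 2)) *: one = cmb (- (t / 2)) 1 0 by tocmb; congr cmb; ring.
have hxy : mul x y = cmb 0 0 0 -> True by [].
rewrite e /cmb !(amDl, amDr, amZl, amZr) !am1l !am1r -/cmb.
rewrite !scale0r ?am0l ?am0r ?scaler0 ?addr0 ?add0r hq.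
tocmb; congr cmb; field; exact: H2.
Qed.

Lemma indep_shift al be : forall k0 k1 k2,
  k0 *: one + k1 *: (x + (- al) *: one) + k2 *: (y + (- be) *: one) = 0 ->
  [/\ k0 = 0, k1 = 0 & k2 = 0].
Proof.
move=> k0 k1 k2 e.
have : cmb (k0 - k1 * al - k2 * be) k1 k2 = 0.
  rewrite -e; tocmb; congr cmb; ring.
case/Hind => h0 h1 h2; split => //.
by move: h0; rewrite h1 h2 !mul0r !subr0.
Qed.


Lemma core (cu cv al be ga : F) :
  mul x x = cu *: one -> mul y y = cv *: one ->
  mul (cmb al 1 0) (cmb be 0 1) = ga *: one ->
  mul (cmb be 0 1) (cmb al 1 0) = ga *: one.
Proof.
move=> hxx hyy hab.
have ex : x = cmb al 1 0 + (- al) *: one by tocmb; congr cmb; ring.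
have ey : y = cmb be 0 1 + (- be) *: one by tocmb; congr cmb; ring.
have hP : mul x y = cmb (ga - al * be) (- be) (- al).
  have key : forall p q r w : A, mul (p + r) (q + w) = mul p q + mul p w + (mul r q + mul r w).
    by move=> p q r w; rewrite amDl !amDr.
  rewrite {1}ex {1}ey key hab !amZl !amZr !am1l !am1r.
  tocmb; congr cmb; ring.
have hxx' : mul x x = cmb cu 0 0 by rewrite hxx cmb1 cmbZ; congr cmb; ring.
have hyy' : mul y y = cmb cv 0 0 by rewrite hyy cmb1 cmbZ; congr cmb; ring.
have [t [s hq]] : exists t s, mul (cmb 0 1 1) (cmb 0 1 1) = cmb s (t*1) (t*1).
  by apply: quad_cmb; rewrite oner_eq0.
have e11 : cmb 0 1 1 = x + y by tocmb; congr cmb; ring.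
rewrite e11 amDl !amDr in hq.
have hQ' : mul y x = cmb s (t*1) (t*1) - (mul x x + mul x y) - mul y y.
  by rewrite -hq [mul x x + _ + _]addrC addrK addrK.
have hQ : mul y x = cmb (s - cu - cv - (ga - al*be)) (t + be) (t + al).
  rewrite hQ' hxx' hP hyy'; rewrite ?(cmbD, cmbZ, cmbN); congr cmb; ring.
have M := mul_cmb hxx' hP hQ hyy'.
have [t2 [s2 hq2]] : exists t s, mul (cmb 0 1 (-1)) (cmb 0 1 (-1)) = cmb s (t*1) (t*(-1)).
  by apply: quad_cmb; rewrite oner_eq0.
rewrite M in hq2; case/cmb_inj: hq2 => _ q1 q2.
have ht : t = 0.
  have h2t : 2 * t = 0 by apply: (comb2 (c1:=-1) (c2:=-1) q1 q2); ring.
  by move/eqP: h2t; rewrite mulf_eq0 (negbTE H2) /= => /eqP.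
subst t.
have f1 := Hfl (cmb 0 1 0) (cmb 0 0 1); rewrite !M in f1; case/cmb_inj: f1 => f10 f11 _.
have f2 := Hfl (cmb 0 0 1) (cmb 0 1 0); rewrite !M in f2; case/cmb_inj: f2 => f20 f21 _.
have F1 : s - cu - cv - 2 * (ga - al * be) = 0 by apply: (comb1 (c:=1) f11); ring.
have F2 : al * (s - cu - cv) + 2 * be * cu = 0 by apply: (comb1 (c:=1) f10); ring.
have F3 : be * (s - cu - cv) + 2 * al * cv = 0 by apply: (comb1 (c:=-1) f20); ring.
have hN : forall z0 z1 z2, n (cmb z0 z1 z2) =
    z0^+2 - (z1^+2 * cu + z2^+2 * cv + z1 * z2 * (s - cu - cv)).
  move=> z0 z1 z2.
  have hsq : mul (cmb 0 z1 z2) (cmb 0 z1 z2) =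
      (z1^+2 * cu + z2^+2 * cv + z1 * z2 * (s - cu - cv)) *: one.
    by rewrite M cmb1 cmbZ; congr cmb; ring.
  eapply Hn; last exact: hsq.
    case: (boolP ((z1 != 0) || (z2 != 0))) => hz.
      right; split; last by eexists; exact: hsq.
      case=> k; rewrite cmb1 cmbZ => /cmb_inj [_ h1 h2].
      by move: hz; rewrite h1 h2 !mulr0 eqxx.
    left; move: hz; rewrite negb_or !negbK => /andP [/eqP -> /eqP ->].
    by rewrite -cmb0.
  by rewrite cmb1 cmbZ cmbD; congr cmb; ring.
pose B := fun z : A => exists z0 z1 z2, z = cmb z0 z1 z2.
have hsub : subalgebra mul one B.
  split; [split| |].
  - by exists 0, 0, 0; exact: cmb0.
  - move=> _ _ [a0 [a1 [a2 ->]]] [b0 [b1 [b2 ->]]]; rewrite cmbD.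
    by do 3 eexists; reflexivity.
  - move=> k _ [a0 [a1 [a2 ->]]]; rewrite cmbZ.
    by do 3 eexists; reflexivity.
  - by exists 1, 0, 0; exact: cmb1.
  - move=> _ _ [a0 [a1 [a2 ->]]] [b0 [b1 [b2 ->]]]; rewrite M.
    by do 3 eexists; reflexivity.
have hdim : dim3 B.
  exists one, x, y; split.
  - by exists 1, 0, 0; exact: cmb1.
  - by exists 0, 1, 0; exact: cmbx.
  - by exists 0, 0, 1; exact: cmby.
  - exact: Hind.
  - by move=> _ [z0 [z1 [z2 ->]]]; exists z0, z1, z2.
pose d := cmb 0 (2 * be) (2 * al).
have nd0 : n d = 0.
  rewrite /d hN; apply: (comb2 (c1:=-2*be) (c2:=-2*al) F2 F3); ring.
have rad : radical n B d.
  split; first by exists 0, (2 * be), (2 * al).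
  move=> _ [z0 [z1 [z2 ->]]]; rewrite /polar /d cmbD !hN.
  apply: (comb2 (c1:=-2*z1) (c2:=-2*z2) F2 F3); ring.
have d0 : d = 0.
  case: (Hnd hsub hdim) => [H0|[[v0 [rv0 nz0 span]] [z [rz nz]]]]; first exact: H0.
  case: (span _ rad) => k hk; case: (span _ rz) => k' hk'.
  case: rv0 => [[w0 [w1 [w2 hw]]] _].
  have hnz : n z = k'^+2 * (w0^+2 - (w1^+2 * cu + w2^+2 * cv + w1 * w2 * (s - cu - cv))).
    by rewrite hk' hw cmbZ hN; ring.
  have hnd : n d = k^+2 * (w0^+2 - (w1^+2 * cu + w2^+2 * cv + w1 * w2 * (s - cu - cv))).
    by rewrite hk hw cmbZ hN; ring.
  move: nd0; rewrite hnd => /eqP; rewrite mulf_eq0 => /orP [|/eqP hN0].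
    by rewrite expf_eq0 /= => /eqP k0; rewrite hk k0 scale0r.
  by move: nz; rewrite hnz hN0 mulr0 eqxx.
move: d0; rewrite /d cmb0 => /cmb_inj [_ hb ha].
have be0 : be = 0 by move/eqP: hb; rewrite mulf_eq0 (negbTE H2) => /eqP.
have al0 : al = 0 by move/eqP: ha; rewrite mulf_eq0 (negbTE H2) => /eqP.
subst al be.
rewrite M cmb1 cmbZ; congr cmb; try ring.
apply/eqP; rewrite -subr_eq0; apply/eqP; apply: (comb1 (c:=1) F1); ring.
Qed.

End Basis.
End Main.

Theorem proposition4p4 (F : fieldType) (A : lmodType F) (mul : A -> A -> A)
    (one : A) (n : A -> F) :
  (2 : F) != 0 ->
  unital_algebra mul one ->
  flexible mul ->
  quadratic mul one ->
  is_norm mul one n ->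
  (forall B : A -> Prop, subalgebra mul one B -> dim3 B -> nondegenerate_on n B) ->
  von_neumann_finite mul one /\ reversible mul.
Proof.
move=> H2 Hu Hfl Hq Hn Hnd.
have key : forall (a b : A) (ga : F), mul a b = ga *: one -> mul b a = ga *: one.
  move=> a b ga hab.
  case: (classic (forall k0 k1 k2 : F, k0 *: one + k1 *: a + k2 *: b = 0 ->
     [/\ k0 = 0, k1 = 0 & k2 = 0])) => [hi|hd]; last by rewrite -(dep_comm Hu hd).
  have [al [cu hu]] := recenter_x H2 Hu Hq (x:=a) (y:=b) hi.
  have hi' : forall k0 k1 k2 : F, k0 *: one + k1 *: b + k2 *: a = 0 ->
      [/\ k0 = 0, k1 = 0 & k2 = 0].
    move=> k0 k1 k2 e; have [] := hi k0 k2 k1; first by rewrite addrAC.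
    by move=> -> -> ->.
  have [be [cv hv]] := recenter_x H2 Hu Hq (x:=b) (y:=a) hi'.
  have hiuv := indep_shift (x:=a) (y:=b) hi (al:=al) (be:=be).
  have ea : a = cmb one (a + (- al) *: one) (b + (- be) *: one) al 1 0.
    by rewrite /cmb scale1r scale0r addr0 scaleNr addrCA subrr addr0.
  have eb : b = cmb one (a + (- al) *: one) (b + (- be) *: one) be 0 1.
    by rewrite /cmb scale1r scale0r addr0 scaleNr addrCA subrr addr0.
  have := core H2 Hu Hfl Hq Hn Hnd hiuv (al:=al) (be:=be) (ga:=ga) hu hv.
  by rewrite -ea -eb => /(_ hab).
split.
  by move=> a b h; have := key a b 1; rewrite scale1r; apply.
move=> a b h; have := key a b 0; rewrite scale0r; apply; exact: h.
Qed.
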